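(* For every pure state $\ket\Psi\in\mathcal H_A\otimes\mathcal H_B\otimes\mathcal H_C$ (finite-dimensional) and every integer $n\ge2$, $Z_n(A:B:C)_{\ket\Psi}$ is a real number with $|Z_n(A:B:C)_{\ket\Psi}|\le1$, and $Z_n(A:B:C)_{\ket\Psi}$ is invariant under permuting the roles of the subsystems $A,B,C$ (e.g. $Z_n(A:B:C)=Z_n(B:A:C)=Z_n(C:B:A)$).
   Context: For a subsystem $X$ and $\pi\in S_N$, $\pi_X$ permutes the $N$ copies of $\mathcal H_X$ according to $\pi$ and acts trivially otherwise. For integer $n\ge2$, arrange $1,\dots,n^2$ in an $n\times n$ array row by row; $\pi^{(1)}\in S_{n^2}$ is the product of the $n$ cycles $(kn+1,\dots,kn+n)$, $k=0,\dots,n-1$ (cycling each row), and $\pi^{(2)}\in S_{n^2}$ is the product of the $n$ cycles $(j,n+j,\dots,(n-1)n+j)$, $j=1,\dots,n$ (cycling each column). $Z_n(A:B:C)_{\ket\Psi}=\bra\Psi^{\otimes n^2}(\pi^{(1)}_A\otimes\pi^{(2)}_B\otimes\mathrm{id}_C)\ket\Psi^{\otimes n^2}$; $Z_n(B:A:C)$ denotes the same expression with the roles of $A$ and $B$ exchanged, etc. *)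

(* Defs.v *)
From mathcomp Require Import all_boot all_order all_fingroup all_algebra.
Set Implicit Arguments. Unset Strict Implicit. Unset Printing Implicit Defensive.
Import Order.TTheory GRing.Theory Num.Theory.
Local Open Scope ring_scope.

(* The N = n^2 copies are indexed by the cells (r, c) of an n x n array:
   cell (r, c) (0-based) carries the label r*n + c + 1. *)
Definition cell (n : nat) := ('I_n * 'I_n)%type.

Definition rowcyc_fun n (x : cell n) : cell n := (x.1, ordS x.2).
Definition rowcyc_inv n (x : cell n) : cell n := (x.1, ord_pred x.2).
Lemma rowcyc_can n : cancel (@rowcyc_fun n) (@rowcyc_inv n).
Proof. by case=> r c; rewrite /rowcyc_fun /rowcyc_inv /= ordSK. Qed.
Definition pi1 n : {perm cell n} := perm (can_inj (@rowcyc_can n)).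

Definition colcyc_fun n (x : cell n) : cell n := (ordS x.1, x.2).
Definition colcyc_inv n (x : cell n) : cell n := (ord_pred x.1, x.2).
Lemma colcyc_can n : cancel (@colcyc_fun n) (@colcyc_inv n).
Proof. by case=> r c; rewrite /colcyc_fun /colcyc_inv /= ordSK. Qed.
Definition pi2 n : {perm cell n} := perm (can_inj (@colcyc_can n)).

(* A vector of H_A (x) H_B (x) H_C, with H_X = C^dX, given by its
   coordinates in the computational basis. *)
Definition tripartite (C : numClosedFieldType) (dA dB dC : nat) :=
  'I_dA -> 'I_dB -> 'I_dC -> C.

Definition is_pure_state (C : numClosedFieldType) dA dB dC
  (Psi : tripartite C dA dB dC) : Prop :=
  \sum_(i < dA) \sum_(j < dB) \sum_(k < dC) `|Psi i j k| ^+ 2 = 1.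

(* <Psi|^{(x) N} (pA_A (x) pB_B (x) pC_C) |Psi>^{(x) N}, for copies indexed
   by a finite type I.  A permutation operator pi_X sends the basis vector
   |x_i>_{i in I} of H_X^{(x) I} to |x_{pi^-1 i}>_{i in I}
   (the content of copy i is moved to copy pi i). *)
Definition Zperm (C : numClosedFieldType) dA dB dC (I : finType)
  (Psi : tripartite C dA dB dC) (pA pB pC : {perm I}) : C :=
  \sum_(a : {ffun I -> 'I_dA}) \sum_(b : {ffun I -> 'I_dB})
   \sum_(c : {ffun I -> 'I_dC})
    (\prod_(i : I) Num.conj (Psi (a ((pA^-1)%g i)) (b ((pB^-1)%g i)) (c ((pC^-1)%g i))))
    * \prod_(i : I) Psi (a i) (b i) (c i).

Definition Zn (C : numClosedFieldType) dA dB dC (n : nat)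
  (Psi : tripartite C dA dB dC) : C :=
  Zperm Psi (pi1 n) (pi2 n) 1%g.

(* Main.v *)
Set Warnings "-notation-overridden,-ambiguous-paths".
Require Import Defs.
From mathcomp Require Import all_boot all_order all_fingroup all_algebra.
From mathcomp Require Import ring.
Import Order.TTheory GRing.Theory Num.Theory.
Local Open Scope ring_scope.

Section Gen.
Variables (C : numClosedFieldType) (dA dB dC : nat) (I : finType).
Variable Psi : tripartite C dA dB dC.

Definition comp_ff {T : finType} (s : {perm I}) (a : {ffun I -> T}) : {ffun I -> T} :=
  [ffun i => a (s i)].

Lemma comp_ff_inj (T : finType) (s : {perm I}) : injective (@comp_ff T s).
Proof.
move=> a a' /ffunP H; apply/ffunP=> j; have := H (s^-1 j)%g.
by rewrite !ffunE permKV.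
Qed.

Lemma sum3_reindex (R : nmodType) (F : {ffun I -> 'I_dA} -> {ffun I -> 'I_dB} -> {ffun I -> 'I_dC} -> R)
  (sA sB sC : {perm I}) :
  \sum_a \sum_b \sum_c F a b c =
  \sum_a \sum_b \sum_c F (comp_ff sA a) (comp_ff sB b) (comp_ff sC c).
Proof.
rewrite (reindex_inj (@comp_ff_inj _ sA)); apply: eq_bigr => a _.
rewrite (reindex_inj (@comp_ff_inj _ sB)); apply: eq_bigr => b _.
by rewrite (reindex_inj (@comp_ff_inj _ sC)).
Qed.

Lemma Zperm_reindex (pA pB pC sA sB sC : {perm I}) :
  Zperm Psi pA pB pC =
  \sum_(a : {ffun I -> 'I_dA}) \sum_(b : {ffun I -> 'I_dB}) \sum_(c : {ffun I -> 'I_dC})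
    (\prod_(i : I) Num.conj (Psi (a (sA ((pA^-1)%g i))) (b (sB ((pB^-1)%g i))) (c (sC ((pC^-1)%g i)))))
    * \prod_(i : I) Psi (a (sA i)) (b (sB i)) (c (sC i)).
Proof.
rewrite /Zperm (sum3_reindex _ _ sA sB sC).
by apply: eq_bigr => a _; apply: eq_bigr => b _; apply: eq_bigr => c _;
  rewrite /comp_ff; congr (_ * _); apply: eq_bigr => i _; rewrite !ffunE.
Qed.

Lemma Zperm_conjg (pA pB pC qA qB qC s : {perm I}) :
  (forall i, qA (s i) = s (pA i)) -> (forall i, qB (s i) = s (pB i)) ->
  (forall i, qC (s i) = s (pC i)) ->
  Zperm Psi pA pB pC = Zperm Psi qA qB qC.
Proof.
move=> hA hB hC.
have inv : forall p q : {perm I}, (forall i, q (s i) = s (p i)) ->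
   forall i, (q^-1)%g (s i) = s ((p^-1)%g i).
  move=> p q h i; apply: (@perm_inj _ q); by rewrite permKV h permKV.
rewrite (Zperm_reindex _ _ _ s s s) /Zperm.
apply: eq_bigr => a _; apply: eq_bigr => b _; apply: eq_bigr => c _.
congr (_ * _).
  rewrite [RHS](reindex_inj (@perm_inj _ s)); apply: eq_bigr => i _.
  by rewrite (inv _ _ hA) (inv _ _ hB) (inv _ _ hC).
by rewrite [RHS](reindex_inj (@perm_inj _ s)).
Qed.

Lemma Zperm_mul (pA pB pC qA qB qC r : {perm I}) :
  (forall j, r (qA j) = pA j) -> (forall j, r (qB j) = pB j) ->
  (forall j, r (qC j) = pC j) ->
  Zperm Psi pA pB pC = Zperm Psi qA qB qC.
Proof.
move=> hA hB hC.
have inv : forall p q : {perm I}, (forall j, r (q j) = p j) ->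
   forall i, (p^-1)%g (r i) = (q^-1)%g i.
  move=> p q h i; apply: (@perm_inj _ p); by rewrite permKV -h permKV.
rewrite /Zperm.
apply: eq_bigr => a _; apply: eq_bigr => b _; apply: eq_bigr => c _.
congr (_ * _).
rewrite (reindex_inj (@perm_inj _ r)); apply: eq_bigr => i _.
by rewrite (inv _ _ hA) (inv _ _ hB) (inv _ _ hC).
Qed.

Lemma Zperm_conjC (pA pB pC : {perm I}) :
  Num.conj (Zperm Psi pA pB pC) = Zperm Psi (pA^-1)%g (pB^-1)%g (pC^-1)%g.
Proof.
rewrite (Zperm_reindex _ _ _ pA pB pC) /Zperm rmorph_sum.
apply: eq_bigr => a _; rewrite rmorph_sum; apply: eq_bigr => b _.
rewrite rmorph_sum; apply: eq_bigr => c _.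
rewrite rmorphM !rmorph_prod mulrC !invgK; congr (_ * _).
  by apply: eq_bigr => i _; rewrite /= ?conjCK ?permKV.
Qed.

Lemma amgm (u v : C) : `|u| * `|v| *+ 2 <= `|u| ^+ 2 + `|v| ^+ 2.
Proof.
have h : 0 <= (`|u| - `|v|) ^+ 2.
  by rewrite -realEsqr rpredB // normr_real.
rewrite sqrrB in h.
by rewrite -subr_ge0 addrAC.
Qed.

Lemma sum_f2 : is_pure_state Psi ->
  \sum_(a : {ffun I -> 'I_dA}) \sum_(b : {ffun I -> 'I_dB}) \sum_(c : {ffun I -> 'I_dC})
    \prod_(i : I) `|Psi (a i) (b i) (c i)| ^+ 2 = 1.
Proof.
rewrite /is_pure_state => H.
transitivity (\prod_(i : I) \sum_(x < dA) \sum_(y < dB) \sum_(z < dC) `|Psi x y z| ^+ 2);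
  last by rewrite H big1.
rewrite bigA_distr_bigA; apply: eq_bigr => a _.
rewrite bigA_distr_bigA; apply: eq_bigr => b _.
by rewrite bigA_distr_bigA.
Qed.

Lemma Zperm_norm (pA pB pC : {perm I}) : is_pure_state Psi ->
  `|Zperm Psi pA pB pC| <= 1.
Proof.
move=> H.
set f := fun (a : {ffun I -> 'I_dA}) (b : {ffun I -> 'I_dB}) (c : {ffun I -> 'I_dC}) =>
  \prod_(i : I) `|Psi (a i) (b i) (c i)| ^+ 2.
set g := fun (a : {ffun I -> 'I_dA}) (b : {ffun I -> 'I_dB}) (c : {ffun I -> 'I_dC}) =>
  \prod_(i : I) `|Psi (a ((pA^-1)%g i)) (b ((pB^-1)%g i)) (c ((pC^-1)%g i))| ^+ 2.
have Sf : \sum_a \sum_b \sum_c f a b c = 1 by exact: sum_f2.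
have Sg : \sum_a \sum_b \sum_c g a b c = 1.
  rewrite (sum3_reindex _ _ pA pB pC) -Sf; apply: eq_bigr => a _;
  apply: eq_bigr => b _; apply: eq_bigr => c _.
  by apply: eq_bigr => i _; rewrite !ffunE !permKV.
rewrite /Zperm; apply: le_trans; first exact: ler_norm_sum.
apply: le_trans.
  apply: ler_sum => a _; apply: le_trans; first exact: ler_norm_sum.
  apply: ler_sum => b _; apply: le_trans; first exact: ler_norm_sum.
  exact: lexx.
have two : (0 : C) < 2%:R by rewrite ltr0n.
rewrite -(ler_pM2l two) mulr1 mulr_sumr.
apply: (@le_trans _ _ (\sum_a \sum_b \sum_c (g a b c + f a b c))).
  apply: ler_sum => a _; rewrite mulr_sumr; apply: ler_sum => b _.
  rewrite mulr_sumr; apply: ler_sum => c _.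
  rewrite normrM !normr_prod mulr_natl.
  under eq_bigr => i _ do rewrite norm_conjC.
  rewrite -!normr_prod.
  apply: le_trans (amgm _ _) _.
  by rewrite /f /g !normr_prod -!prodrXl.
have E : \sum_a \sum_b \sum_c (g a b c + f a b c) =
   \sum_a \sum_b \sum_c g a b c + \sum_a \sum_b \sum_c f a b c.
  rewrite -big_split; apply: eq_bigr => a _; rewrite -big_split;
  apply: eq_bigr => b _; by rewrite -big_split.
by rewrite E Sf Sg -mulr2n.
Qed.

End Gen.

Section Cells.
Variable m : nat.
Local Notation K := m.+2.

Lemma ordS_add (x : 'I_K) : ordS x = x + 1.
Proof. exact: (esym (@add_Zp_1 K x)). Qed.
Lemma ordP_sub (x : 'I_K) : ord_pred x = x - 1.
Proof. exact: (esym (@sub_Zp_1 K x)). Qed.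

Lemma pi1E (x : cell K) : pi1 K x = (x.1, x.2 + 1).
Proof. by rewrite permE /rowcyc_fun ordS_add. Qed.
Lemma pi2E (x : cell K) : pi2 K x = (x.1 + 1, x.2).
Proof. by rewrite permE /colcyc_fun ordS_add. Qed.
Lemma pi1VE (x : cell K) : ((pi1 K)^-1)%g x = (x.1, x.2 - 1).
Proof. apply: (@perm_inj _ (pi1 K)); rewrite permKV pi1E /= subrK; by case: x. Qed.
Lemma pi2VE (x : cell K) : ((pi2 K)^-1)%g x = (x.1 - 1, x.2).
Proof. apply: (@perm_inj _ (pi2 K)); rewrite permKV pi2E /= subrK; by case: x. Qed.

Definition trf (x : cell K) : cell K := (x.2, x.1).
Definition negf (x : cell K) : cell K := (- x.1, - x.2).
Definition Mf (x : cell K) : cell K := (- x.1 - x.2, x.2).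
Definition Nf (x : cell K) : cell K := (x.1, - x.1 - x.2).
Lemma trK : cancel trf trf. Proof. by case. Qed.
Lemma negK : cancel negf negf. Proof. by case=> a b; rewrite /negf /= !opprK. Qed.
Lemma MK : cancel Mf Mf. Proof. case=> a b; rewrite /Mf /=; congr (_, _); ring. Qed.
Lemma NK : cancel Nf Nf. Proof. case=> a b; rewrite /Nf /=; congr (_, _); ring. Qed.
Definition trp := perm (can_inj trK).
Definition negp := perm (can_inj negK).
Definition Mp := perm (can_inj MK).
Definition Np := perm (can_inj NK).
Lemma trE x : trp x = trf x. Proof. by rewrite permE. Qed.
Lemma negE x : negp x = negf x. Proof. by rewrite permE. Qed.
Lemma ME x : Mp x = Mf x. Proof. by rewrite permE. Qed.
Lemma NE x : Np x = Nf x. Proof. by rewrite permE. Qed.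
End Cells.

Ltac cellt := let r := fresh "r" in let c := fresh "c" in
  move=> [r c]; rewrite ?(permM, perm1, pi1E, pi2E, pi1VE, pi2VE, trE, negE, ME, NE)
    /trf /negf /Mf /Nf /=; congr (_, _); ring.

Theorem mainTheorem10 (C : numClosedFieldType) (dA dB dC : nat)
  (Psi : tripartite C dA dB dC) (n : nat) :
  is_pure_state Psi -> (2 <= n)%N ->
  [/\ Zn n Psi \is Num.real,
      `|Zn n Psi| <= 1 &
      Zn n Psi = Zperm Psi (pi2 n) (pi1 n) 1%g           (* Z(B:A:C) *)
   /\ Zn n Psi = Zperm Psi (pi1 n) 1%g (pi2 n)           (* Z(A:C:B) *)
   /\ Zn n Psi = Zperm Psi (pi2 n) 1%g (pi1 n)           (* Z(C:A:B) *)
   /\ Zn n Psi = Zperm Psi 1%g (pi1 n) (pi2 n)           (* Z(B:C:A) *)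
   /\ Zn n Psi = Zperm Psi 1%g (pi2 n) (pi1 n)].         (* Z(C:B:A) *)
Proof.
move=> HP; case: n => [|[|m]] // _.
rewrite /Zn.
have Ea : Zperm Psi (pi1 m.+2) (pi2 m.+2) 1%g = Zperm Psi (pi2 m.+2) (pi1 m.+2) 1%g.
  by apply: (Zperm_conjg _ _ _ _ _ _ _ _ _ _ _ _ (trp m)); cellt.
have Eb : Zperm Psi (pi1 m.+2) (pi2 m.+2) 1%g = Zperm Psi (pi1 m.+2) 1%g (pi2 m.+2).
  rewrite (Zperm_mul _ _ _ _ _ _ _ _ _ (pi1 m.+2 * (pi2 m.+2)^-1)%g 1%g
     ((pi2 m.+2)^-1)%g (pi2 m.+2)); try cellt.
  by apply: (Zperm_conjg _ _ _ _ _ _ _ _ _ _ _ _ (Mp m)); cellt.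
have Ec : Zperm Psi (pi1 m.+2) 1%g (pi2 m.+2) = Zperm Psi (pi2 m.+2) 1%g (pi1 m.+2).
  by apply: (Zperm_conjg _ _ _ _ _ _ _ _ _ _ _ _ (trp m)); cellt.
have Ed : Zperm Psi (pi1 m.+2) 1%g (pi2 m.+2) = Zperm Psi 1%g (pi1 m.+2) (pi2 m.+2).
  rewrite (Zperm_mul _ _ _ _ _ _ _ _ _ 1%g ((pi1 m.+2)^-1)%g
     (pi2 m.+2 * (pi1 m.+2)^-1)%g (pi1 m.+2)); try cellt.
  by apply: (Zperm_conjg _ _ _ _ _ _ _ _ _ _ _ _ (Np m)); cellt.
have Ee : Zperm Psi 1%g (pi1 m.+2) (pi2 m.+2) = Zperm Psi 1%g (pi2 m.+2) (pi1 m.+2).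
  by apply: (Zperm_conjg _ _ _ _ _ _ _ _ _ _ _ _ (trp m)); cellt.
split.
- rewrite CrealE Zperm_conjC invg1; apply/eqP; symmetry.
  by apply: (Zperm_conjg _ _ _ _ _ _ _ _ _ _ _ _ (negp m)); cellt.
- exact: Zperm_norm.
- by rewrite -Ec -Ee -Ed -Eb.
Qed.
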